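(* Let $G$ be a graph with vertex set $V$ of order $n$ and let $k$ be an integer with $2(k-1)>n\ge 2$. Let $H$ be the graph with vertex set $V\cup V'\cup W$, where $V'=\{u':u\in V\}$ is a set of $n$ new vertices and $W$ is a set of $2(k-1)$ new vertices, whose edges are: all edges of $G$; the edges $uu'$ for $u\in V$; $k-1$ pairwise disjoint edges covering $W$ (so $H[W]\cong (k-1)K_2$); and all edges between $V$ and $W$ (no edges between $V'$ and $W$, and no further edges). Then $\alpha(H)=n+k-1$, $\mathrm{diss}(H)=n+2(k-1)$, $\nu_s(H)\ge k-1$, and $$\alpha(G)\ge k\iff \nu_s(H)\ge k \iff \mathrm{diss}(H)\ne \alpha(H)+\nu_s(H).$$
   Context: All graphs are finite, simple and undirected. A set $I$ of vertices of a graph $G$ is a dissociation set if the induced subgraph $G[I]$ has maximum degree at most $1$; $\mathrm{diss}(G)$ is the maximum order of a dissociation set in $G$. $\alpha(G)$ is the independence number. An induced matching is a matching $N$ such that the subgraph of $G$ induced by the vertices covered by $N$ has edge set exactly $N$; $\nu_s(G)$ is the maximum size of an induced matching in $G$. *)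

(* Defs.v *)
(* A simple graph on a finType T is a symmetric irreflexive rel. *)
From mathcomp Require Import all_boot.
Set Implicit Arguments. Unset Strict Implicit. Unset Printing Implicit Defensive.

Section Graphs.
Variable T : finType.
Variable e : rel T.

Definition independent (S : {set T}) : bool :=
  [forall x in S, forall y in S, ~~ e x y].

Definition dissociation (S : {set T}) : bool :=
  [forall x in S, #|[set y in S | e x y]| <= 1].

Definition is_edge (A : {set T}) : bool :=
  [exists x, exists y, e x y && (A == [set x; y])].

Definition induced_matching (N : {set {set T}}) : bool :=
  [&& [forall A in N, is_edge A], trivIset N &
      [forall x in cover N, forall y in cover N, e x y ==> ([set x; y] \in N)]].

Definition alpha : nat := \max_(S : {set T} | independent S) #|S|.
Definition diss : nat := \max_(S : {set T} | dissociation S) #|S|.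
Definition nu_s : nat := \max_(N : {set {set T}} | induced_matching N) #|N|.
End Graphs.

(* Vertex set of H: V (inl (inl u)), V' (inl (inr u) = u'), and
   W = 'I_(k-1) * bool, the matching edges of W being (i,false)(i,true). *)
Definition Hvert (T : finType) (k : nat) : finType :=
  ((T + T) + ('I_(k - 1) * bool))%type.

Definition Hrel (T : finType) (e : rel T) (k : nat) : rel (Hvert T k) :=
  fun x y =>
    match x, y with
    | inl (inl u), inl (inl v) => e u v
    | inl (inl u), inl (inr v) => u == v
    | inl (inr u), inl (inl v) => u == v
    | inl (inl _), inr _ => true
    | inr _, inl (inl _) => true
    | inr (i, b), inr (j, c) => (i == j) && (b != c)
    | _, _ => false
    end.
Arguments Hrel {T} e k.

(* Main.v *)
Require Import Defs.
From mathcomp Require Import all_boot zify.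
Set Implicit Arguments. Unset Strict Implicit. Unset Printing Implicit Defensive.

Definition SV (T : finType) k (S : {set Hvert T k}) : {set T} := [set u | (inl (inl u) : Hvert T k) \in S].
Definition SV' (T : finType) k (S : {set Hvert T k}) : {set T} := [set u | (inl (inr u) : Hvert T k) \in S].
Definition SW (T : finType) k (S : {set Hvert T k}) : {set 'I_(k-1) * bool} := [set w | (inr w : Hvert T k) \in S].

Lemma card_split (T : finType) k (S : {set Hvert T k}) :
  #|S| = #|SV S| + #|SV' S| + #|SW S|.
Proof.
rewrite -sum1_card /SV /SV' /SW.
rewrite big_sumType /=.
rewrite big_sumType /=.
by rewrite !sum1dep_card.
Qed.

Lemma card_W k : #|[set: 'I_(k-1) * bool]| = 2 * (k - 1).
Proof. by rewrite cardsT card_prod card_ord card_bool mulnC. Qed.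

Lemma indepP (V : finType) (r : rel V) S :
  independent r S -> forall x y, x \in S -> y \in S -> ~~ r x y.
Proof. by move=> /forallP H x y xS yS; move: (H x) => /implyP/(_ xS)/forallP/(_ y)/implyP/(_ yS). Qed.

Lemma SW_indep_bound (T : finType) (e : rel T) k S : independent (Hrel e k) S -> #|SW S| <= k - 1.
Proof.
move=> /indepP hS.
rewrite -(card_in_imset (f := fst)); last first.
  move=> [i b] [j c]; rewrite !inE /= => h1 h2 eij; subst j.
  case: b c h1 h2 => [] [] // h1 h2; have := hS _ _ h1 h2; by rewrite /= eqxx.
by apply: leq_trans (max_card _) _; rewrite card_ord.
Qed.

Lemma SVV'_bound (T : finType) k (S : {set Hvert T k}) :
  (forall u, (inl (inl u) : Hvert T k) \in S -> (inl (inr u) : Hvert T k) \in S -> False) ->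
  #|SV S| + #|SV' S| <= #|T|.
Proof.
move=> h; rewrite -cardsUI.
have -> : SV S :&: SV' S = set0.
  apply/setP => u; rewrite !inE; apply/negP => /andP [h1 h2]; exact: h u h1 h2.
by rewrite cards0 addn0 max_card.
Qed.

Lemma alpha_bound (T : finType) (e : rel T) k S : independent (Hrel e k) S -> #|S| <= #|T| + (k - 1).
Proof.
move=> hS; have hW := SW_indep_bound hS; move/indepP: hS => hS.
have hVV := SVV'_bound (fun u h1 h2 => negP (hS _ _ h1 h2) (eqxx u)).
rewrite card_split.
case: (set_0Vmem (SV S)) => [E0 | [u uS]].
  rewrite E0 cards0 add0n; apply: leq_add => //; exact: max_card.

have -> : SW S = set0.
  apply/setP => w; rewrite !inE; apply/negP => wS.
  by rewrite inE in uS; move: (hS _ _ wS uS); case: w {wS}.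
rewrite cards0; lia.
Qed.

Lemma dissP (V : finType) (r : rel V) S :
  dissociation r S -> forall x, x \in S -> #|[set y in S | r x y]| <= 1.
Proof. by move=> /forallP H x xS; move: (H x) => /implyP/(_ xS). Qed.

Lemma diss_bound (T : finType) (e : rel T) k S : #|T| < 2 * (k - 1) ->
  dissociation (Hrel e k) S -> #|S| <= #|T| + 2 * (k - 1).
Proof.
move=> hn /dissP hS; rewrite card_split.
have h1 : #|SV S| <= #|T| := max_card _.
have h2 : #|SV' S| <= #|T| := max_card _.
have h3 : #|SW S| <= 2 * (k - 1) by rewrite -card_W; apply: subset_leq_card; apply: subsetT.
case: (set_0Vmem (SV S)) => [E0 | [u uS]].
  rewrite E0 cards0 add0n; exact: leq_add.
have h4 : #|SW S| <= 1.
  apply: leq_trans (hS _ _) ; last by rewrite inE in uS; exact: uS.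
  rewrite -(card_in_imset (f := fun w => (inr w : Hvert T k))); last by move=> x y _ _ [].
  apply: subset_leq_card; apply/subsetP => y /imsetP [w wS ->]; rewrite !inE.
  by rewrite inE in wS; rewrite wS; case: w {wS}.
lia.
Qed.

Lemma card_true m : #|[set w : 'I_m * bool | w.2]| = m.
Proof.
have -> : [set w : 'I_m * bool | w.2] = [set (i, true) | i in [set: 'I_m]].
  apply/setP => -[i b]; rewrite !inE /=; apply/idP/imsetP => [hb | [j _ [_ ->]]] //.
  by exists i; rewrite ?inE // hb.
by rewrite card_imset ?cardsT ?card_ord // => i j [].
Qed.

Definition S0 (T : finType) k : {set Hvert T k} :=
  [set x | match x with inl (inr _) => true | inr w => w.2 | _ => false end].

Lemma S0_indep (T : finType) (e : rel T) k : independent (Hrel e k) (S0 T k).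
Proof.
apply/forallP => x; apply/implyP; rewrite inE => hx; apply/forallP => y; apply/implyP; rewrite inE => hy.
by move: x y hx hy => [[u|u]|[i [] ]] [[v|v]|[j [] ]] //=; rewrite andbF.
Qed.

Lemma S0_card (T : finType) k : #|S0 T k| = #|T| + (k - 1).
Proof.
rewrite card_split.
have -> : SV (S0 T k) = set0 by apply/setP => u; rewrite !inE.
have -> : SV' (S0 T k) = setT by apply/setP => u; rewrite !inE.
have -> : SW (S0 T k) = [set w | w.2] by apply/setP => u; rewrite !inE.
by rewrite cards0 cardsT card_true.
Qed.

Definition S1 (T : finType) k : {set Hvert T k} :=
  [set x | match x with inl (inl _) => false | _ => true end].

Lemma S1_diss (T : finType) (e : rel T) k : dissociation (Hrel e k) (S1 T k).
Proof.
apply/forallP => x; apply/implyP; rewrite inE.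
case: x => [[u|u]|[i b]] // _.
  rewrite (_ : [set _ in _ | _] = set0) ?cards0 //.
  by apply/setP => -[[v|v]|[j c]]; rewrite !inE.
apply: (@leq_trans #|[set (inr (i, ~~ b) : Hvert T k)]|); last by rewrite cards1.
apply: subset_leq_card; apply/subsetP => -[[v|v]|[j c]]; rewrite !inE //=.
by case/andP => /eqP -> ; case: b c => [] [].
Qed.

Lemma S1_card (T : finType) k : #|S1 T k| = #|T| + 2 * (k - 1).
Proof.
rewrite card_split.
have -> : SV (S1 T k) = set0 by apply/setP => u; rewrite !inE.
have -> : SV' (S1 T k) = setT by apply/setP => u; rewrite !inE.
have -> : SW (S1 T k) = setT by apply/setP => u; rewrite !inE.
by rewrite cards0 cardsT card_W.
Qed.

Lemma im_matching (V D : finType) (r : rel V) (P : {set D}) (f g : D -> V) :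
  (forall i, i \in P -> r (f i) (g i)) ->
  (forall i j, i \in P -> j \in P -> 
     [|| f i == f j, f i == g j, g i == f j | g i == g j] -> i = j) ->
  (forall i j x y, i \in P -> j \in P -> x \in [set f i; g i] -> y \in [set f j; g j] ->
     r x y -> exists2 l, l \in P & [set x; y] = [set f l; g l]) ->
  induced_matching r [set [set f i; g i] | i in P] /\
  #|[set [set f i; g i] | i in P]| = #|P|.
Proof.
move=> hr hinj hind.
have inj : {in P &, injective (fun i => [set f i; g i])}.
  move=> i j iP jP E; apply: hinj => //.
  have : f i \in [set f j; g j] by rewrite -E !inE eqxx.
  by rewrite !inE => /orP [] ->; rewrite ?orbT.
split; last by rewrite card_in_imset.
apply/and3P; split.
- apply/forallP => A; apply/implyP => /imsetP [i iP ->].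
  by apply/existsP; exists (f i); apply/existsP; exists (g i); rewrite (hr i iP) eqxx.
- apply/trivIsetP => A B /imsetP [i iP ->] /imsetP [j jP ->] neq.
  rewrite -setI_eq0; apply/eqP/setP => x; rewrite !inE.
  apply/negbTE/negP => /andP [h1 h2]; move/negP: neq; apply.
  suff -> : i = j by [].
  apply: hinj => //.
  by case/orP: h1 => /eqP <-; case/orP: h2 => /eqP ->; rewrite eqxx ?orbT.
- apply/forallP => x; apply/implyP => /bigcupP [A /imsetP [i iP ->] xA].
  apply/forallP => y; apply/implyP => /bigcupP [B /imsetP [j jP ->] yB].
  apply/implyP => rxy; have [l lP ->] := hind _ _ _ _ iP jP xA yB rxy.
  by apply/imsetP; exists l.
Qed.




Lemma W_matching (T : finType) (e : rel T) k :
  k - 1 <= nu_s (Hrel e k).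
Proof.
have [| | | hm hc] := @im_matching _ _ (Hrel e k) [set: 'I_(k-1)]
  (fun i => inr (i, false)) (fun i => inr (i, true)).
- by move=> i _ /=; rewrite eqxx.
- by move=> i j _ _ /or4P [] /eqP [] -> //.
- move=> i j x y _ _; rewrite !inE => /orP [] /eqP -> /orP [] /eqP -> //=.
  + by rewrite andbF.
  + by case/andP => /eqP <- _; exists i; rewrite ?inE.
  + by case/andP => /eqP <- _; exists i; rewrite ?inE // setUC.
  + by rewrite andbF.
rewrite /nu_s; apply: leq_trans (@leq_bigmax_cond _ (fun N => induced_matching (Hrel e k) N) (fun N => #|N|) _ hm).
by rewrite hc cardsT card_ord.
Qed.

Lemma V_matching (T : finType) (e : rel T) k (I : {set T}) :
  independent e I -> #|I| <= nu_s (Hrel e k).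
Proof.
move=> /indepP hI.
have [| | | hm hc] := @im_matching _ _ (Hrel e k) I
  (fun u => inl (inl u)) (fun u => inl (inr u)).
- by move=> i _ /=.
- by move=> i j _ _ /or4P [] /eqP; congruence.
- move=> i j x y iI jI; rewrite !inE => /orP [] /eqP -> /orP [] /eqP -> //=.
  + by move=> h; have := hI _ _ iI jI; rewrite h.
  + by move/eqP <-; exists i.
  + by move/eqP <-; exists i; rewrite // setUC.
rewrite /nu_s; apply: leq_trans (@leq_bigmax_cond _ (fun N => induced_matching (Hrel e k) N) (fun N => #|N|) _ hm).
by rewrite hc.
Qed.

Lemma im_edge (V : finType) (r : rel V) N A : induced_matching r N -> A \in N ->
  exists x y, r x y /\ A = [set x; y].
Proof.
case/and3P => /forallP h _ _ AN; move: (h A); rewrite AN /= => /existsP [x /existsP [y /andP [rxy /eqP ->]]].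
by exists x, y.
Qed.

Lemma im_same (V : finType) (r : rel V) N A B x : induced_matching r N -> A \in N -> B \in N ->
  x \in A -> x \in B -> A = B.
Proof.
case/and3P => _ /trivIsetP h _ AN BN xA xB; apply/eqP; apply/negPn/negP => neq.
by have := disjointFr (h _ _ AN BN neq) xA; rewrite xB.
Qed.

Lemma im_adj (V : finType) (r : rel V) N A B x y : induced_matching r N -> A \in N -> B \in N ->
  x \in A -> y \in B -> r x y -> A = B.
Proof.
move=> hN AN BN xA yB rxy; have := hN; case/and3P => _ _ /forallP h.
have xc : x \in cover N by apply/bigcupP; exists A.
have yc : y \in cover N by apply/bigcupP; exists B.
move: (h x); rewrite xc /= => /forallP/(_ y); rewrite yc rxy /= => xyN.
have -> : A = [set x; y] by apply: (im_same hN AN xyN xA); rewrite !inE eqxx.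
by apply: (im_same hN xyN BN _ yB); rewrite !inE eqxx orbT.
Qed.

Lemma nu_bound (T : finType) (e : rel T) k N : irreflexive e ->
  induced_matching (Hrel e k) N -> #|N| <= maxn (alpha e) (k - 1).
Proof.
move=> irr hN.
case: (boolP [forall A in N, [exists u, (inl (inl u) : Hvert T k) \in A]]) => [/forallP hall | ].
  case: (set_0Vmem N) => [-> | [A0 A0N]]; first by rewrite cards0.
  move: (hall A0); rewrite A0N /= => /existsP [u0 _].
  pose rep (A : {set Hvert T k}) := odflt u0 [pick u | (inl (inl u) : Hvert T k) \in A].
  have repP A : A \in N -> (inl (inl (rep A)) : Hvert T k) \in A.
    move=> AN; rewrite /rep; case: pickP => [u hu // | none].
    by move: (hall A); rewrite AN /= => /existsP [u hu]; rewrite none in hu.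
  have inj : {in N &, injective rep}.
    by move=> A B AN BN E; apply: (im_same hN AN BN (repP A AN)); rewrite E repP.
  rewrite -(card_in_imset inj); apply: leq_trans (leq_maxl _ _).
  apply: (@leq_bigmax_cond _ (fun S => independent e S) (fun S => #|S|)).
  apply/forallP => x; apply/implyP => /imsetP [A AN ->].
  apply/forallP => y; apply/implyP => /imsetP [B BN ->].
  apply/negP => hxy.
  have AB := im_adj (x := inl (inl (rep A))) (y := inl (inl (rep B))) hN AN BN (repP A AN) (repP B BN) hxy.
  by move: hxy; rewrite AB irr.
move/forallPn => [A0]; rewrite negb_imply => /andP [A0N /existsPn hA0].
have [x [y [hxy E0]]] := im_edge hN A0N.
have xA0 : x \in A0 by rewrite E0 !inE eqxx.
have yA0 : y \in A0 by rewrite E0 !inE eqxx orbT.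
have [w0 xw0] : exists w0, x = inr w0.
  move: hxy xA0 yA0; clear E0; case: x => [[u|u]|w]; last by exists w.
    by move=> _ h; move: (hA0 u); rewrite h.
  by case: y => [[v|v]|[j c]] //= /eqP <- _ h; move: (hA0 u); rewrite h.
have noV A u : A \in N -> (inl (inl u) : Hvert T k) \in A -> False.
  move=> AN uA; have AA0 := im_adj hN AN A0N uA xA0 (_ : Hrel e k _ x); rewrite xw0 in AA0.
  by move: (hA0 u); rewrite -AA0 // uA.
pose g (A : {set Hvert T k}) := odflt w0.1 [pick i | (inr (i, false) : Hvert T k) \in A].
have gP A : A \in N -> (inr (g A, false) : Hvert T k) \in A.
  move=> AN; rewrite /g; case: pickP => [i hi // | none].
  have [x' [y' [hxy' E']]] := im_edge hN AN.
  have x'A : x' \in A by rewrite E' !inE eqxx.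
  have y'A : y' \in A by rewrite E' !inE eqxx orbT.
  move: hxy' x'A y'A; clear E'; case: x' => [[u|u]|[i b]].
  - by move=> _ h; case: (noV A u AN h).
  - by case: y' => [[v|v]|[j c]] //= /eqP <- _ h; case: (noV A u AN h).
  case: y' => [[v|v]|[j c]] //=; first by move=> _ _ h; case: (noV A v AN h).
  case/andP => /eqP <-; case: b; case: c => // _ h1 h2.
    by rewrite none in h2.
  by rewrite none in h1.
have inj : {in N &, injective g}.
  by move=> A B AN BN E; apply: (im_same hN AN BN (gP A AN)); rewrite E gP.
rewrite -(card_in_imset inj); apply: leq_trans (leq_maxr _ _).
by apply: leq_trans (max_card _) _; rewrite card_ord.
Qed.

Theorem mainTheorem10 (T : finType) (e : rel T) (k : nat) :
  symmetric e -> irreflexive e ->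
  2 <= #|T| -> #|T| < 2 * (k - 1) ->
  [/\ alpha (Hrel e k) = #|T| + (k - 1),
      diss (Hrel e k) = #|T| + 2 * (k - 1),
      k - 1 <= nu_s (Hrel e k),
      (k <= alpha e <-> k <= nu_s (Hrel e k)) &
      (k <= nu_s (Hrel e k) <-> diss (Hrel e k) <> alpha (Hrel e k) + nu_s (Hrel e k))].
Proof.
move=> _ irr h2 hn.
have hA : alpha (Hrel e k) = #|T| + (k - 1).
  apply/eqP; rewrite eqn_leq; apply/andP; split.
    by rewrite /alpha; apply/bigmax_leqP => S hS; exact: (alpha_bound hS).
  rewrite -(S0_card T k) /alpha.
  exact: (@leq_bigmax_cond _ (fun S => independent (Hrel e k) S) (fun S => #|S|) _ (S0_indep e k)).
have hD : diss (Hrel e k) = #|T| + 2 * (k - 1).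
  apply/eqP; rewrite eqn_leq; apply/andP; split.
    by rewrite /diss; apply/bigmax_leqP => S hS; exact: (diss_bound hn hS).
  rewrite -(S1_card T k) /diss.
  exact: (@leq_bigmax_cond _ (fun S => dissociation (Hrel e k) S) (fun S => #|S|) _ (S1_diss e k)).
have hW := W_matching e k.
have h1 : alpha e <= nu_s (Hrel e k).
  by rewrite /alpha; apply/bigmax_leqP => I hI; exact: (V_matching k hI).
have h3 : nu_s (Hrel e k) <= maxn (alpha e) (k - 1).
  by rewrite /nu_s; apply/bigmax_leqP => N hN; exact: (nu_bound irr hN).
split => //.
- split; lia.
- rewrite hA hD; split; lia.
Qed.
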